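(* There is a quantum $k$-party $\mathsf{SMP}$ protocol (no shared randomness or entanglement) for $\mathrm{GroupByEQ}_{k,n}$ with communication cost $O(k\log k\log n)$ that outputs a correct answer with probability at least $2/3$ on every input.
   Context: Quantum $k$-party $\mathsf{SMP}$ model: $k$ players with private inputs $x_1,\dots,x_k\in\{0,1\}^n$ each send one quantum message, depending only on their own input, to a referee, who outputs an answer; cost is the total number of qubits sent. $\mathrm{GroupByEQ}_{k,n}$: the referee must output a partition $P_1,\dots,P_s$ of $[k]$ such that for all $i,j\in[k]$, $i$ and $j$ lie in a common part if and only if $x_i=x_j$. *)

(* Defs.v *)
From HB Require Import structures.
From mathcomp Require Import all_boot all_order all_algebra all_field.
Set Implicit Arguments. Unset Strict Implicit. Unset Printing Implicit Defensive.
Import Order.TTheory GRing.Theory Num.Theory.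
Local Open Scope ring_scope.

(* A linear operator on the Hilbert space with orthonormal basis indexed by T,
   given by its matrix entries <a|M|b> = M a b. *)
Definition op (T : finType) := T -> T -> algC.

(* Positive semidefinite: <v|M|v> >= 0 for every vector v (in algC, 0 <= z
   means z is a nonnegative real). *)
Definition psd (T : finType) (M : op T) : Prop :=
  forall v : T -> algC, 0 <= \sum_(a : T) \sum_(b : T) (v a)^* * M a b * v b.

Definition trace (T : finType) (M : op T) : algC := \sum_(a : T) M a a.

Definition density (T : finType) (M : op T) : Prop := psd M /\ trace M = 1.

Definition idop (T : finType) : op T := fun a b => (a == b)%:R.

Definition povm (O T : finType) (E : O -> op T) : Prop :=
  (forall o, psd (E o)) /\ (forall a b, \sum_(o : O) E o a b = idop a b).

Definition outcome_prob (O T : finType) (E : O -> op T) (rho : op T) (o : O) : algC :=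
  \sum_(a : T) \sum_(b : T) E o a b * rho b a.

Definition qbasis (m : nat) := {ffun 'I_m -> bool}.

(* Computational basis of the joint register of k players, player i holding q i qubits. *)
Definition jbasis (k : nat) (q : 'I_k -> nat) := {dffun forall i : 'I_k, qbasis (q i)}.

Definition tensor_states (k : nat) (q : 'I_k -> nat)
  (rho : forall i : 'I_k, op (qbasis (q i))) : op (jbasis q) :=
  fun a b => \prod_(i < k) rho i (a i) (b i).

Definition groupbyeq_correct (k n : nat) (x : 'I_k -> n.-tuple bool)
  (P : {set {set 'I_k}}) : bool :=
  partition P [set: 'I_k] &&
  [forall i : 'I_k, forall j : 'I_k,
     [exists B in P, (i \in B) && (j \in B)] == (x i == x j)].

(* Main.v *)
Require Import Defs.
From HB Require Import structures.
From mathcomp Require Import all_boot all_order all_algebra all_field.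
From mathcomp Require Import ring perm zify.
From Stdlib Require Import FunctionalExtensionality.
Set Implicit Arguments. Unset Strict Implicit. Unset Printing Implicit Defensive.
Import Order.TTheory GRing.Theory Num.Theory.
Local Open Scope ring_scope.

Section Hilbert.
Variable T : finType.
Implicit Types (M N Q : op T) (u v w z : T -> algC).

Definition qf M v := \sum_(a : T) \sum_(b : T) (v a)^* * M a b * v b.
Definition dotv u v := \sum_(a : T) (u a)^* * v a.
Definition nrm v := dotv v v.
Definition app M v := fun a => \sum_(b : T) M a b * v b.
Definition herm M := forall a b, M b a = (M a b)^*.
Definition proj M := herm M /\ forall a b, \sum_(c : T) M a c * M c b = M a b.
Definition compl M : op T := fun a b => idop a b - M a b.
Definition Qb (b : bool) M := if b then M else compl M.
Definition sandw Q M : op T := fun a b => \sum_(c : T) \sum_(d : T) Q a c * M c d * Q d b.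
Definition vsub u v := fun a => u a - v a.

Lemma sum_idopl a (g : T -> algC) : \sum_(b : T) idop a b * g b = g a.
Proof.
rewrite (bigD1 a) //= /idop eqxx mul1r big1 ?addr0 // => b.
by rewrite eq_sym => /negbTE ->; rewrite mul0r.
Qed.

Lemma sum_idopr b (g : T -> algC) : \sum_(a : T) g a * idop a b = g b.
Proof.
rewrite (bigD1 b) //= /idop eqxx mulr1 big1 ?addr0 // => a /negbTE ->.
by rewrite mulr0.
Qed.

Lemma conj_idop (a b : T) : (idop a b)^* = idop a b.
Proof. by rewrite /idop conjC_nat. Qed.

Lemma nrm_ge0 v : 0 <= nrm v.
Proof. by apply: sumr_ge0 => a _; rewrite mulrC mul_conjC_ge0. Qed.

Lemma herm_idop : herm (@idop T).
Proof. by move=> a b; rewrite conj_idop /idop eq_sym. Qed.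

Lemma compl_proj M : proj M -> proj (compl M).
Proof.
move=> [hM pM]; split.
  by move=> a b; rewrite /compl rmorphB /= hM herm_idop.
move=> a b; rewrite /compl.
under eq_bigr => c _ do rewrite mulrBl !mulrBr.
rewrite !sumrB sum_idopl sum_idopl sum_idopr pM /idop; ring.
Qed.

Lemma complK M (a b : T) : compl (compl M) a b = M a b.
Proof. by rewrite /compl opprB addrC subrK. Qed.

Lemma Qb_proj b M : proj M -> proj (Qb b M).
Proof. by case: b => //= /compl_proj. Qed.

Lemma qf_sandw Q M v : herm Q -> qf (sandw Q M) v = qf M (app Q v).
Proof.
move=> hQ; rewrite /qf /sandw /app.
transitivity (\sum_a \sum_b \sum_c \sum_d (v a)^* * Q a c * M c d * (Q d b * v b)).
  apply: eq_bigr => a _; apply: eq_bigr => b _.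
  rewrite mulr_sumr mulr_suml; apply: eq_bigr => c _.
  rewrite mulr_sumr mulr_suml; apply: eq_bigr => d _; ring.
symmetry.
transitivity (\sum_c \sum_d \sum_a \sum_b (v a)^* * Q a c * M c d * (Q d b * v b)).
  apply: eq_bigr => c _; apply: eq_bigr => d _.
  rewrite rmorph_sum /= mulr_suml mulr_suml; apply: eq_bigr => a _.
  rewrite mulr_sumr; apply: eq_bigr => b _.
  by rewrite rmorphM /= -hQ; ring.
under eq_bigr => c _ do rewrite exchange_big.
rewrite exchange_big; apply: eq_bigr => a _.
under eq_bigr => c _ do rewrite exchange_big.
by rewrite exchange_big.
Qed.

Lemma psd_sandw Q M : herm Q -> psd M -> psd (sandw Q M).
Proof. by move=> hQ pM v; move: (qf_sandw M v hQ); rewrite /qf => ->; apply: pM. Qed.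

Lemma qf_sum (I : finType) (Ms : I -> op T) v :
  qf (fun a b => \sum_(i : I) Ms i a b) v = \sum_(i : I) qf (Ms i) v.
Proof.
rewrite /qf.
transitivity (\sum_a \sum_b \sum_(i : I) (v a)^* * Ms i a b * v b).
  by apply: eq_bigr => a _; apply: eq_bigr => b _; rewrite mulr_sumr mulr_suml.
under eq_bigr => a _ do rewrite exchange_big.
by rewrite exchange_big.
Qed.

Lemma qf_idop v : qf (@idop T) v = nrm v.
Proof.
rewrite /qf /nrm /dotv; apply: eq_bigr => a _.
under eq_bigr => b _ do rewrite -mulrA.
by rewrite -mulr_sumr sum_idopl.
Qed.

Lemma qf_psd M v : psd M -> 0 <= qf M v.
Proof. by move=> pM; apply: pM. Qed.

Lemma app_sub M u w a : app M (vsub u w) a = app M u a - app M w a.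
Proof. by rewrite /app /vsub -sumrB; apply: eq_bigr => b _; rewrite mulrBr. Qed.

Lemma app_compl M v a : app (compl M) v a = v a - app M v a.
Proof.
rewrite /app /compl.
under eq_bigr => b _ do rewrite mulrBl.
by rewrite sumrB sum_idopl.
Qed.

Lemma dot_herm M u w : herm M -> dotv (app M u) w = dotv u (app M w).
Proof.
move=> hM; rewrite /dotv /app.
under eq_bigr => a _ do rewrite rmorph_sum /= mulr_suml.
rewrite exchange_big; apply: eq_bigr => b _.
rewrite mulr_sumr; apply: eq_bigr => a _.
by rewrite rmorphM /= -hM; ring.
Qed.

Lemma app_app M N v a : app M (app N v) a = app (fun a b => \sum_c M a c * N c b) v a.
Proof.
rewrite /app.
under eq_bigr => c _ do rewrite mulr_sumr.
rewrite exchange_big; apply: eq_bigr => b _.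
by rewrite mulr_suml; apply: eq_bigr => c _; rewrite mulrA.
Qed.

Lemma dot_orth Q x y : proj Q -> dotv (app (compl Q) x) (app Q y) = 0.
Proof.
move=> PQ; have [hc _] := compl_proj PQ; rewrite dot_herm //.
rewrite /dotv big1 // => a _.
rewrite app_app.
have -> : app (fun a0 b => \sum_c compl Q a0 c * Q c b) y a = 0.
  rewrite /app big1 // => b _.
  rewrite /compl.
  under eq_bigr => c _ do rewrite mulrBl.
  rewrite sumrB sum_idopl PQ.2 subrr; by rewrite mul0r.
by rewrite mulr0.
Qed.

Lemma nrm_add_orth x y : dotv x y = 0 ->
  nrm (fun a => x a + y a) = nrm x + nrm y.
Proof.
move=> o; have o' : dotv y x = 0.
  have <- : (dotv x y)^* = dotv y x.
    by rewrite /dotv rmorph_sum; apply: eq_bigr => a _;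
       rewrite rmorphM /= conjCK mulrC.
  by rewrite o conjC0.
rewrite /nrm /dotv.
transitivity (\sum_a ((x a)^* * x a + (y a)^* * y a) + (dotv x y + dotv y x)).
  rewrite /dotv -!big_split /=; apply: eq_bigr => a _.
  by rewrite rmorphD /=; ring.
by rewrite o o' addr0 big_split /=; rewrite addr0.
Qed.

Lemma pyth Q x y : proj Q ->
  nrm (fun a => app (compl Q) x a + app Q y a) = nrm (app (compl Q) x) + nrm (app Q y).
Proof. by move=> PQ; apply: nrm_add_orth; apply: dot_orth. Qed.

Lemma nrm_app_le Q y : proj Q -> nrm (app Q y) <= nrm y.
Proof.
move=> PQ.
have -> : nrm y = nrm (fun a => app (compl Q) y a + app Q y a).
  congr nrm; apply: functional_extensionality => a.
  by rewrite app_compl subrK.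
by rewrite pyth // lerDr nrm_ge0.
Qed.

Lemma nrm_app_proj Q v : proj Q -> nrm (app Q v) = qf Q v.
Proof.
move=> [hQ pQ]; rewrite /nrm (dot_herm _ _ hQ).
rewrite /dotv /qf.
transitivity (\sum_a (v a)^* * app Q v a).
  apply: eq_bigr => a _; rewrite app_app /app.
  by under eq_bigr => b _ do rewrite pQ.
by apply: eq_bigr => a _; rewrite /app mulr_sumr; apply: eq_bigr => b _; rewrite mulrA.
Qed.

End Hilbert.
Section Measure.
Variables (T O : finType).
Implicit Types (M N Q : op T) (u v w z : T -> algC).

Fixpoint allproj (L : seq (op T)) : Prop :=
  match L with [::] => True | P :: Ps => proj P /\ allproj Ps end.

Fixpoint Ef (L : seq (op T)) (F : seq bool -> O) (o : O) : op T :=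
  match L with
  | [::] => fun a b => (F [::] == o)%:R * idop a b
  | P :: Ps => fun a b => \sum_(bb : bool) sandw (Qb bb P) (Ef Ps (fun s => F (bb :: s)) o) a b
  end.

Fixpoint Aseq (L : seq (op T)) (bs : seq bool) v : T -> algC :=
  match L, bs with
  | P :: Ps, b :: bs' => Aseq Ps bs' (app (Qb b P) v)
  | _, _ => v
  end.

Lemma qf_scal (c : algC) v : qf (fun a b => c * idop a b) v = c * nrm v.
Proof.
rewrite -qf_idop /qf mulr_sumr; apply: eq_bigr => a _; rewrite mulr_sumr.
by apply: eq_bigr => b _; ring.
Qed.

Lemma Ef_psd L F o : allproj L -> psd (Ef L F o).
Proof.
elim: L F => [|P Ps IH] F /=.
  move=> _ v; have := qf_scal (F [::] == o)%:R v; rewrite /qf => ->.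
  by apply: mulr_ge0; [apply: ler0n | apply: nrm_ge0].
move=> [pP aPs] v.
have := qf_sum (fun bb : bool => sandw (Qb bb P) (Ef Ps (fun s => F (bb :: s)) o)) v.
rewrite /qf => ->; apply: sumr_ge0 => bb _.
apply: psd_sandw; last by apply: IH.
by case: (Qb_proj bb pP).
Qed.

Lemma Ef_sum L F a b : allproj L -> \sum_(o : O) Ef L F o a b = idop a b.
Proof.
elim: L F a b => [|P Ps IH] F a b /=.
  move=> _; rewrite -mulr_suml (bigD1 (F [::])) //= eqxx big1 ?addr0 ?mul1r //.
  by move=> o; rewrite eq_sym => /negbTE ->.
move=> [pP aPs]; rewrite exchange_big /=.
transitivity (\sum_(bb : bool) \sum_c Qb bb P a c * Qb bb P c b).
  apply: eq_bigr => bb _; rewrite /sandw exchange_big; apply: eq_bigr => c _.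
  rewrite exchange_big /=.
  transitivity (\sum_d Qb bb P a c * idop c d * Qb bb P d b).
    by apply: eq_bigr => d _; rewrite -mulr_suml -mulr_sumr IH.
  under eq_bigr => d _ do rewrite -mulrA.
  by rewrite -mulr_sumr sum_idopl.
rewrite big_bool /=.
by rewrite (Qb_proj true pP).2 (Qb_proj false pP).2 /= /compl addrC subrK.
Qed.

Lemma Ef_lb L F bs v : allproj L -> size bs = size L ->
  nrm (Aseq L bs v) <= qf (Ef L F (F bs)) v.
Proof.
elim: L F bs v => [|P Ps IH] F [|b bs] v //=.
  by move=> _ _; rewrite qf_scal eqxx mul1r.
move=> [pP aPs] [sz].
rewrite qf_sum (bigD1 b) //= qf_sandw; last by case: (Qb_proj b pP).
rewrite -[X in X <= _]addr0; apply: lerD.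
  by apply: (IH (fun s => F (b :: s))).
apply: sumr_ge0 => bb _; rewrite qf_sandw; last by case: (Qb_proj bb pP).
by apply: qf_psd; apply: Ef_psd.
Qed.

Lemma Aseq_ub L bs v (eta : algC) : allproj L ->
  all2 (fun P b => nrm (app (compl (Qb b P)) v) <= eta) L bs ->
  forall z, nrm (vsub v (Aseq L bs z)) <= nrm (vsub v z) + (size L)%:R * eta.
Proof.
elim: L bs => [|P Ps IH] [|b bs] //=.
  by move=> _ _ z; rewrite mul0r addr0.
move=> [pP aPs] /andP[hb hall] z.
apply: le_trans (IH _ aPs hall _) _.
have pQ := Qb_proj b pP.
have -> : vsub v (app (Qb b P) z) =
   (fun a => app (compl (Qb b P)) v a + app (Qb b P) (vsub v z) a).
  apply: functional_extensionality => a.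
  by rewrite app_compl app_sub /vsub; ring.
rewrite pyth // -addn1 natrD mulrDl mul1r.
rewrite [_ * eta + eta]addrC addrA lerD2r [nrm (vsub v z) + eta]addrC.
by apply: lerD => //; apply: nrm_app_le.
Qed.

Lemma sq_ident (z d zc dc: algC) : (zc - dc) * (z - d) - (5%:R / 6%:R * (zc * z) - 5%:R * (dc * d))
   = (6%:R)^-1 * ((zc - 6%:R * dc) * (z - 6%:R * d)).
Proof. by field. Qed.

Lemma nrm_sub_lb v w : (5%:R / 6%:R) * nrm v - 5%:R * nrm (vsub v w) <= nrm w.
Proof.
rewrite /nrm /dotv mulr_sumr mulr_sumr -sumrB; apply: ler_sum => a _.
rewrite /vsub -subr_ge0.
have -> : w a = v a - (v a - w a) by ring.
move: (v a - w a) => d.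
have -> : v a - (v a - d) = d by ring.
rewrite rmorphB /= sq_ident.
have -> : (v a)^* - 6%:R * d^* = (v a - 6%:R * d)^*.
  by rewrite rmorphB /= rmorphM /= conjC_nat.
apply: mulr_ge0; first by rewrite invr_ge0 ler0n.
by rewrite mulrC mul_conjC_ge0.
Qed.

End Measure.
Section Swap.
Variables (k r : nat) (Y V : finType) (G : V -> Y -> algC).
Hypothesis Greal : forall u y, (G u y)^* = G u y.
Definition ov (u w : V) := \sum_(y : Y) G u y * G w y.
Hypothesis Gnorm : forall u, ov u u = 1.
Hypothesis Gov0 : forall u w, u != w -> 0 <= ov u w.
Hypothesis Gov1 : forall u w, u != w -> ov u w <= 2%:R^-1.

Definition XT := {ffun 'I_k -> {ffun 'I_r -> Y}}.
Definition MT := {ffun 'I_r -> bool}.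

Definition tau (i j : 'I_k) (U : MT) (c : 'I_r) (l : 'I_k) : 'I_k :=
  if U c then tperm i j l else l.

Lemma tauK i j U c : involutive (tau i j U c).
Proof. by move=> l; rewrite /tau; case: (U c) => //; rewrite tpermK. Qed.

Definition sw i j (U : MT) (A : XT) : XT := [ffun l => [ffun c => A (tau i j U c l) c]].
Definition mxor (U V0 : MT) : MT := [ffun c => U c (+) V0 c].

Lemma sw_comp i j U V0 A : sw i j U (sw i j V0 A) = sw i j (mxor U V0) A.
Proof.
apply/ffunP => l; apply/ffunP => c; rewrite !ffunE /tau !ffunE.
by case: (U c); case: (V0 c) => //=; rewrite tpermK.
Qed.

Lemma sw0 i j A : sw i j [ffun=> false] A = A.
Proof. by apply/ffunP => l; apply/ffunP => c; rewrite !ffunE /tau ffunE. Qed.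

Lemma mxorK U : mxor U U = [ffun=> false].
Proof. by apply/ffunP => c; rewrite !ffunE addbb. Qed.

Lemma swK i j U : involutive (sw i j U).
Proof. by move=> A; rewrite sw_comp mxorK sw0. Qed.

Lemma sw_eq i j U A B : (A == sw i j U B) = (B == sw i j U A).
Proof.
apply/eqP/eqP => ->; by rewrite swK.
Qed.

Definition hr : algC := (2 ^ r)%:R^-1.

Lemma card_MT : #|{: MT}| = (2 ^ r)%N.
Proof. by rewrite card_ffun card_bool card_ord. Qed.

Lemma hr_sum (c : algC) : \sum_(U : MT) c = (2 ^ r)%:R * c.
Proof. by rewrite sumr_const card_MT mulr_natl. Qed.

Lemma hr_K : hr * (2 ^ r)%:R = 1.
Proof. by rewrite /hr mulVf // pnatr_eq0 expn_eq0. Qed.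

Definition Top i j : op XT := fun A B => hr * \sum_(U : MT) (A == sw i j U B)%:R.

Lemma Top_herm i j : herm (Top i j).
Proof.
move=> A B; rewrite /Top rmorphM /= /hr fmorphV /= conjC_nat rmorph_sum /=.
by congr (_ * _); apply: eq_bigr => U _; rewrite conjC_nat sw_eq.
Qed.

Lemma mxor_inj U : injective (mxor U).
Proof.
move=> V1 V2 h; apply/ffunP => c.
by move/ffunP: h => /(_ c); rewrite !ffunE => /addbI.
Qed.

Lemma Top_proj i j : proj (Top i j).
Proof.
split; first exact: Top_herm.
move=> A B; rewrite /Top.
transitivity (hr * hr * \sum_(U : MT) \sum_(V0 : MT) (A == sw i j U (sw i j V0 B))%:R).
  transitivity (\sum_(C : XT) hr * (hr * ((\sum_(U : MT) (A == sw i j U C)%:R) *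
     (\sum_(V0 : MT) (C == sw i j V0 B)%:R)))).
    by apply: eq_bigr => C _; ring.
  rewrite -mulr_sumr -mulr_sumr mulrA; congr (_ * _).
  under eq_bigr => C _ do rewrite mulr_suml.
  rewrite exchange_big; apply: eq_bigr => U _.
  under eq_bigr => C _ do rewrite mulr_sumr.
  rewrite exchange_big; apply: eq_bigr => V0 _.
  have := sum_idopr (sw i j V0 B) (fun C : XT => (A == sw i j U C)%:R).
  rewrite /idop => <-; apply: eq_bigr => C _; ring.
under eq_bigr => U _ do (under eq_bigr => V0 _ do rewrite sw_comp).
transitivity (hr * hr * \sum_(U : MT) \sum_(W : MT) (A == sw i j W B)%:R).
  congr (_ * _); apply: eq_bigr => U _; symmetry.
  by rewrite [LHS](reindex_inj (@mxor_inj U)).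
by rewrite hr_sum mulrA -(mulrA hr hr) hr_K mulr1.
Qed.

Lemma Top_fix i j (Psi : XT -> algC) :
  (forall U A, Psi (sw i j U A) = Psi A) -> forall A, app (Top i j) Psi A = Psi A.
Proof.
move=> hP A; rewrite /app /Top.
under eq_bigr => B _ do rewrite -mulrA mulr_suml mulr_sumr.
rewrite exchange_big /=.
transitivity (\sum_(U : MT) hr * Psi A).
  apply: eq_bigr => U _; rewrite -mulr_sumr; congr (_ * _).
  under eq_bigr => B _ do rewrite sw_eq mulrC.
  by have := sum_idopr (sw i j U A) Psi; rewrite /idop => ->; rewrite hP.
by rewrite hr_sum mulrA [_ * hr]mulrC hr_K mul1r.
Qed.


Definition Psi (x : 'I_k -> V) (A : XT) : algC := \prod_(l : 'I_k) \prod_(c : 'I_r) G (x l) (A l c).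

Lemma sum_prod2 (g : 'I_k -> 'I_r -> Y -> algC) :
  \sum_(A : XT) \prod_(l : 'I_k) \prod_(c : 'I_r) g l c (A l c)
  = \prod_(l : 'I_k) \prod_(c : 'I_r) \sum_(y : Y) g l c y.
Proof.
symmetry.
under eq_bigr => l _ do rewrite bigA_distr_bigA.
by rewrite bigA_distr_bigA.
Qed.

Lemma Psi_sw x i j U A :
  Psi x (sw i j U A) = \prod_(l : 'I_k) \prod_(c : 'I_r) G (x (tau i j U c l)) (A l c).
Proof.
rewrite /Psi.
under eq_bigr => l _ do (under eq_bigr => c _ do rewrite !ffunE).
rewrite exchange_big [RHS]exchange_big; apply: eq_bigr => c _.
rewrite [RHS](reindex_inj (can_inj (tauK i j U c))).
by apply: eq_bigr => l _; rewrite tauK.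
Qed.

Lemma Psi_eq x i j : x i = x j -> forall U A, Psi x (sw i j U A) = Psi x A.
Proof.
move=> hx U A; rewrite Psi_sw /Psi; apply: eq_bigr => l _; apply: eq_bigr => c _.
rewrite /tau; case: (U c) => //.
by case: tpermP => [->|->|//]; rewrite hx.
Qed.

Lemma Psi_real x A : (Psi x A)^* = Psi x A.
Proof.
rewrite /Psi rmorph_prod /=; apply: eq_bigr => l _.
by rewrite rmorph_prod /=; apply: eq_bigr => c _; rewrite Greal.
Qed.

Lemma nrm_Psi x : nrm (Psi x) = 1.
Proof.
rewrite /nrm /dotv.
under eq_bigr => A _ do rewrite Psi_real /Psi -big_split /=.
under eq_bigr => A _ do (under eq_bigr => l _ do rewrite -big_split /=).
rewrite (sum_prod2 (fun l c y => G (x l) y * G (x l) y)) big1 // => l _; rewrite big1 // => c _.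
exact: Gnorm.
Qed.

Lemma qf_Top_eq x i j :
  qf (Top i j) (Psi x) = hr * \sum_(U : MT) \prod_(c : 'I_r) \prod_(l : 'I_k) ov (x (tau i j U c l)) (x l).
Proof.
rewrite /qf /Top exchange_big /=.
transitivity (\sum_(B : XT) \sum_(U : MT) \sum_(A : XT)
   (hr * Psi x A * Psi x B) * (A == sw i j U B)%:R).
  apply: eq_bigr => B _.
  under eq_bigr => A _ do rewrite Psi_real mulr_sumr mulr_sumr mulr_suml.
  rewrite exchange_big; apply: eq_bigr => U _; apply: eq_bigr => A _; ring.
transitivity (\sum_(B : XT) \sum_(U : MT) hr * Psi x (sw i j U B) * Psi x B).
  apply: eq_bigr => B _; apply: eq_bigr => U _.
  by have := sum_idopr (sw i j U B) (fun A => hr * Psi x A * Psi x B); rewrite /idop.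
rewrite exchange_big mulr_sumr; apply: eq_bigr => U _.
under eq_bigr => B _ do rewrite -mulrA.
rewrite -mulr_sumr; congr (_ * _).
transitivity (\sum_(B : XT) \prod_(l : 'I_k) \prod_(c : 'I_r)
    (G (x (tau i j U c l)) (B l c) * G (x l) (B l c))).
  apply: eq_bigr => B _; rewrite Psi_sw /Psi -big_split; apply: eq_bigr => l _.
  by rewrite -big_split.
rewrite (sum_prod2 (fun l c y => G (x (tau i j U c l)) y * G (x l) y)) exchange_big.
by apply: eq_bigr => c _; apply: eq_bigr => l _.
Qed.

Lemma qf_Top x i j : x i != x j ->
  qf (Top i j) (Psi x) = hr * (1 + ov (x i) (x j) ^+ 2) ^+ r.
Proof.
move=> hx; have ij : i != j by apply: contraNneq hx => ->.
rewrite qf_Top_eq; congr (_ * _).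
transitivity (\sum_(U : MT) \prod_(c : 'I_r) (if U c then ov (x i) (x j) ^+ 2 else 1)).
  apply: eq_bigr => U _; apply: eq_bigr => c _; rewrite /tau.
  case: (U c).
    rewrite (bigD1 i) //= (bigD1 j) 1?eq_sym //= tpermL tpermR.
    rewrite big1 ?mulr1 /ov.
      rewrite expr2; congr (_ * _); apply: eq_bigr => y _; exact: mulrC.
    move=> l /andP[lj li]; rewrite tpermD 1?eq_sym //; exact: Gnorm.
  by rewrite big1 // => l _; exact: Gnorm.
rewrite -(bigA_distr_bigA (fun (c : 'I_r) (b : bool) => if b then ov (x i) (x j) ^+ 2 else 1)).
rewrite big_bool /= prodr_const card_ord addrC.
by [].
Qed.

Lemma qf_Top_le x i j : x i != x j ->
  qf (Top i j) (Psi x) <= (5%:R / 8%:R) ^+ r.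
Proof.
move=> hx; rewrite qf_Top //.
set w := ov (x i) (x j).
have w0 : 0 <= w by apply: Gov0.
have w1 : w <= 2%:R^-1 by apply: Gov1.
have -> : hr * (1 + w ^+ 2) ^+ r = ((1 + w ^+ 2) / 2%:R) ^+ r.
  by rewrite /hr natrX -exprVn exprMn mulrC.
apply: lerXn2r.
- by rewrite qualifE /= mulr_ge0 ?invr_ge0 ?ler0n // addr_ge0 ?exprn_ge0.
- by rewrite qualifE /= mulr_ge0 ?invr_ge0 ?ler0n.
have h : w ^+ 2 <= 4%:R^-1.
  have -> : (4%:R : algC)^-1 = 2%:R^-1 * 2%:R^-1 by rewrite -invfM -natrM.
  by rewrite expr2 ler_pM.
apply: (@le_trans _ _ ((1 + 4%:R^-1) / 2%:R)).
  by rewrite ler_wpM2r ?invr_ge0 ?ler0n // lerD2l.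
by rewrite le_eqVlt; apply/orP; left; apply/eqP; field.
Qed.

End Swap.

Section Finger.
Variables (F : finFieldType) (n s : nat).
Hypothesis cardF : #|F| = (2 ^ (2 * s))%N.
Hypothesis bigF : (2 * n <= 2 ^ (2 * s))%N.

Definition cs : algC := (2 ^ s)%:R^-1.
Definition px (x : n.-tuple bool) : {poly F} := \poly_(j < n) (nth false x j)%:R.
Definition Gf (x : n.-tuple bool) (y : (F * F)%type) : algC :=
  if y.2 == (px x).[y.1] then cs else 0.

Lemma cs_real : cs^* = cs.
Proof. by rewrite /cs fmorphV /= conjC_nat. Qed.

Lemma cs_ge0 : 0 <= cs.
Proof. by rewrite /cs invr_ge0 ler0n. Qed.

Lemma Gf_real x y : (Gf x y)^* = Gf x y.
Proof. by rewrite /Gf; case: ifP => _; rewrite ?cs_real ?conjC0. Qed.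

Lemma ov_Gf x z : ov Gf x z = \sum_(a : F) ((px x).[a] == (px z).[a])%:R * (cs * cs).
Proof.
rewrite /ov (eq_bigr (fun p => Gf x (p.1, p.2) * Gf z (p.1, p.2))); last by case.
rewrite -(pair_bigA _ (fun a b => Gf x (a, b) * Gf z (a, b))).
apply: eq_bigr => a _ /=.
rewrite (bigD1 (px x).[a]) //= big1 ?addr0.
  rewrite /Gf /= eqxx eq_sym.
  by case: eqP => _; rewrite ?mul1r ?mul0r ?mulr0.
by move=> b nb; rewrite /Gf /= (negbTE nb) mul0r.
Qed.

Lemma sum_cnt (P : pred F) (c : algC) : \sum_(a : F) (P a)%:R * c = #|P|%:R * c.
Proof.
rewrite -mulr_suml -natr_sum -sum1_card [in RHS]big_mkcond /=.
by congr (_%:R * c); apply: eq_bigr => a _; rewrite /in_mem /=; case: (P a).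
Qed.

Lemma cs2 : cs * cs * (2 ^ (2 * s))%:R = 1.
Proof.
have -> : (2 ^ (2 * s))%N = (2 ^ s * 2 ^ s)%N by rewrite -expnD addnn -mul2n.
have h : ((2 ^ s)%:R : algC) != 0 by rewrite pnatr_eq0 expn_eq0.
rewrite /cs natrM; move: h; move: ((2 ^ s)%:R : algC) => N h.
by field.
Qed.

Lemma Gf_norm x : ov Gf x x = 1.
Proof.
rewrite ov_Gf (eq_bigr (fun a => cs * cs)); last by move=> a _; rewrite eqxx mul1r.
rewrite sumr_const -mulr_natr.
have -> : #|[pred _ : F | true]| = #|F| by apply: eq_card.
by rewrite cardF cs2.
Qed.

Lemma Gf_ov0 x z : 0 <= ov Gf x z.
Proof.
rewrite ov_Gf; apply: sumr_ge0 => a _.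
by apply: mulr_ge0; [apply: ler0n | apply: mulr_ge0; apply: cs_ge0].
Qed.

Lemma px_inj : injective px.
Proof.
move=> x z h; apply: eq_from_tnth => j.
have := congr1 (fun p : {poly F} => p`_j) h; rewrite /= !coef_poly ltn_ord.
rewrite !(tnth_nth false).
by case: (nth false x j); case: (nth false z j) => //= /eqP; rewrite ?oner_eq0 // eq_sym oner_eq0.
Qed.

Lemma Gf_ov1 x z : x != z -> ov Gf x z <= 2%:R^-1.
Proof.
move=> xz; rewrite ov_Gf.
set q := px x - px z.
have q0 : q != 0 by rewrite subr_eq0; apply: contra xz => /eqP /px_inj ->.
have -> : \sum_(a : F) ((px x).[a] == (px z).[a])%:R * (cs * cs)
          = \sum_(a : F) (root q a)%:R * (cs * cs).
  by apply: eq_bigr => a _; rewrite /root /q hornerD hornerN subr_eq0.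
rewrite sum_cnt.
have hcard : (#|root q| < n.+1)%N.
  have := max_poly_roots q0 (rs := enum (root q)).
  rewrite enum_uniq -cardE => /(_ _ isT) H.
  have : all (root q) (enum (root q)) by apply/allP => a; rewrite mem_enum.
  move=> /H hlt; apply: leq_trans hlt _.
  rewrite /q; apply: leq_trans (size_polyD _ _) _.
  rewrite size_polyN geq_max; apply/andP; split;
    exact: leq_trans (size_poly _ _) (leqnSn n).
have : (#|root q|%:R : algC) <= n%:R by rewrite ler_nat -ltnS.
move=> hle.
apply: (@le_trans _ _ (n%:R * (cs * cs))).
  by rewrite ler_wpM2r // mulr_ge0 // cs_ge0.
have nz : ((2 ^ (2 * s))%:R : algC) != 0 by rewrite pnatr_eq0 expn_eq0.
have -> : cs * cs = ((2 ^ (2 * s))%:R)^-1.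
  by apply: (mulIf nz); rewrite cs2 mulVf.
rewrite ler_pdivrMr ?ltr0n ?expn_gt0 // -[2%:R^-1 * _]mulrC.
rewrite ler_pdivlMr ?ltr0n // -natrM ler_nat mulnC.
exact: bigF.
Qed.

End Finger.

Section Assembly.
Variables (k n s r Q : nat) (F : finFieldType).
Hypothesis cardF : #|F| = (2 ^ (2 * s))%N.
Hypothesis bigF : (2 * n <= 2 ^ (2 * s))%N.
Hypothesis cardQ : #|{: qbasis Q}| = #|{: {ffun 'I_r -> (F * F)%type}}|.

Local Notation Z := {ffun 'I_r -> (F * F)%type}.
Local Notation X := (XT k r (F * F)%type).
Local Notation V := (n.-tuple bool).

Definition be (u : qbasis Q) : Z := enum_val (cast_ord cardQ (enum_rank u)).
Definition bi (z : Z) : qbasis Q := enum_val (cast_ord (esym cardQ) (enum_rank z)).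
Lemma beK : cancel be bi.
Proof. by move=> u; rewrite /bi /be enum_valK cast_ordK enum_rankK. Qed.
Lemma biK : cancel bi be.
Proof.
by move=> z; rewrite /bi /be enum_valK -[cardQ in cast_ord cardQ](esymK cardQ) cast_ordK enum_rankK.
Qed.

Definition qq := fun _ : 'I_k => Q.
Definition phi (a : jbasis qq) : X := [ffun i => be (a i)].
Definition phiinv (A : X) : jbasis qq := [ffun i => bi (A i)].
Lemma phiK : cancel phi phiinv.
Proof. by move=> a; apply/ffunP => i; rewrite /phiinv /phi !ffunE beK. Qed.
Lemma phiinvK : cancel phiinv phi.
Proof. by move=> A; apply/ffunP => i; rewrite /phiinv /phi !ffunE biK. Qed.

Lemma sumJ (g : X -> algC) : \sum_(a : jbasis qq) g (phi a) = \sum_(A : X) g A.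
Proof. by rewrite (reindex phi (onW_bij _ (Bijective phiK phiinvK))). Qed.

Lemma sumQ (g : Z -> algC) : \sum_(u : qbasis Q) g (be u) = \sum_(z : Z) g z.
Proof. by rewrite (reindex be (onW_bij _ (Bijective beK biK))). Qed.

Definition psi (y : V) (u : qbasis Q) : algC := \prod_(c : 'I_r) Gf s y (be u c).
Definition msg (i : 'I_k) (y : V) : op (qbasis (qq i)) := fun u w => psi y u * (psi y w)^*.
Arguments msg : clear implicits.

Lemma msg_density i y : density (msg i y).
Proof.
split.
  move=> v.
  set z := \sum_(a : qbasis Q) (v a)^* * psi y a.
  have -> : \sum_(a : qbasis (qq i)) \sum_(b : qbasis (qq i)) (v a)^* * msg i y a b * v b = z * z^*.
    rewrite /z rmorph_sum /= mulr_suml; apply: eq_bigr => a _.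
    rewrite mulr_sumr; apply: eq_bigr => b _.
    by rewrite /msg rmorphM /= conjCK; ring.
  exact: mul_conjC_ge0.
rewrite /trace /msg.
transitivity (\sum_(u : qbasis Q) \prod_(c : 'I_r) (Gf s y (be u c) * Gf s y (be u c))).
  apply: eq_bigr => u _; rewrite /psi rmorph_prod /= -big_split /=.
  by apply: eq_bigr => c _; rewrite Gf_real.
rewrite (sumQ (fun z => \prod_(c : 'I_r) (Gf s y (z c) * Gf s y (z c)))).
rewrite -(bigA_distr_bigA (fun (c : 'I_r) (w : (F * F)%type) => Gf s y w * Gf s y w)).
by rewrite big1 // => c _; apply: (Gf_norm cardF).
Qed.

Lemma tensor_psi (x : 'I_k -> V) a b :
  tensor_states (fun i => msg i (x i)) a b = Psi (Gf s) x (phi a) * (Psi (Gf s) x (phi b))^*.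
Proof.
rewrite /tensor_states /msg big_split /=; congr (_ * _).
  by apply: eq_bigr => i _; rewrite /psi; apply: eq_bigr => c _; rewrite ffunE.
rewrite rmorph_prod; apply: eq_bigr => i _; rewrite /psi; congr (_^*).
by apply: eq_bigr => c _; rewrite ffunE.
Qed.

Definition toJ (M : op X) : op (jbasis qq) := fun a b => M (phi a) (phi b).

Lemma psd_toJ M : psd M -> psd (toJ M).
Proof.
move=> pM v; pose w := fun A => v (phiinv A).
have := pM w; rewrite -(sumJ (fun A => \sum_(B : X) (w A)^* * M A B * w B)).
congr (0 <= _); apply: eq_bigr => a _.
rewrite -(sumJ (fun B => (w (phi a))^* * M (phi a) B * w B)).
by apply: eq_bigr => b _; rewrite /w /toJ !phiK.
Qed.

Lemma outcome_toJ (M : op X) (x : 'I_k -> V) :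
  outcome_prob (fun P : unit => toJ M) (tensor_states (fun i => msg i (x i))) tt
  = qf M (Psi (Gf s) x).
Proof.
rewrite /outcome_prob /toJ /qf.
under eq_bigr => a _ do under eq_bigr => b _ do rewrite tensor_psi.
transitivity (\sum_(A : X) \sum_(b : jbasis qq)
    M A (phi b) * (Psi (Gf s) x (phi b) * (Psi (Gf s) x A)^*)).
  exact: (sumJ (fun A => \sum_(b : jbasis qq) M A (phi b) * (Psi (Gf s) x (phi b) * (Psi (Gf s) x A)^*))).
apply: eq_bigr => A _.
transitivity (\sum_(B : X) M A B * (Psi (Gf s) x B * (Psi (Gf s) x A)^*)).
  exact: (sumJ (fun B => M A B * (Psi (Gf s) x B * (Psi (Gf s) x A)^*))).
by apply: eq_bigr => B _; ring.
Qed.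

Definition prs : seq ('I_k * 'I_k) := [seq (i, j) | i <- enum 'I_k, j <- enum 'I_k].
Definition Ls : seq (op X) := [seq Top p.1 p.2 | p <- prs].
Definition Fdec (bs : seq bool) : {set {set 'I_k}} :=
  equivalence_partition (fun i j => nth false bs (index (i, j) prs)) [set: 'I_k].
Definition Emeas (P : {set {set 'I_k}}) : op (jbasis qq) := toJ (Ef Ls Fdec P).

Lemma allproj_map (t : seq ('I_k * 'I_k)) : allproj [seq (Top p.1 p.2 : op X) | p <- t].
Proof. by elim: t => [|p t IH] //=; split => //; apply: Top_proj. Qed.

Lemma allproj_Ls : allproj Ls.
Proof. exact: allproj_map. Qed.

Lemma povm_E : povm Emeas.
Proof.
split.
  by move=> P; apply: psd_toJ; apply: Ef_psd; apply: allproj_Ls.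
move=> a b; rewrite /Emeas /toJ Ef_sum; last exact: allproj_Ls.
by rewrite /idop (inj_eq (can_inj phiK)).
Qed.

Lemma outcome_E x P :
  outcome_prob Emeas (tensor_states (fun i => msg i (x i))) P = qf (Ef Ls Fdec P) (Psi (Gf s) x).
Proof. by rewrite -(outcome_toJ _ x). Qed.

Definition bst (x : 'I_k -> V) := [seq (x p.1 == x p.2) | p <- prs].

Lemma mem_prs i j : (i, j) \in prs.
Proof. by apply: allpairs_f; rewrite mem_enum. Qed.

Lemma bst_nth x i j : nth false (bst x) (index (i, j) prs) = (x i == x j).
Proof.
rewrite /bst (nth_map (i, j)); last by rewrite index_mem mem_prs.
by rewrite nth_index // mem_prs.
Qed.

Lemma Fdec_correct x : groupbyeq_correct x (Fdec (bst x)).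
Proof.
have -> : Fdec (bst x) = equivalence_partition (fun i j => x i == x j) [set: 'I_k].
  rewrite /Fdec; congr equivalence_partition.
  by apply: functional_extensionality => i; apply: functional_extensionality => j; rewrite bst_nth.
set P := equivalence_partition _ _.
have eqR : {in [set: 'I_k] & &, equivalence_rel (fun i j => x i == x j)}.
  by move=> a b c _ _ _; split => //; move/eqP ->.
have hP := equivalence_partitionP eqR.
rewrite /groupbyeq_correct hP /=.
have [/eqP cov tiP _] := and3P hP.
apply/forallP => i; apply/forallP => j; apply/eqP; apply/idP/idP.
  case/existsP => B /andP[BP /andP[iB jB]].
  rewrite -(def_pblock tiP BP iB) in jB.
  by rewrite -(pblock_equivalence_partition eqR) ?inE.
move=> hij; apply/existsP; exists (pblock P i).
rewrite pblock_mem ?cov ?inE //= mem_pblock cov inE /=.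
by rewrite (pblock_equivalence_partition eqR) ?inE.
Qed.

Lemma all2_map_pair (R : op X -> bool -> bool) (t : seq ('I_k * 'I_k)) (x : 'I_k -> V) :
  (forall p, R (Top p.1 p.2) (x p.1 == x p.2)) ->
  all2 R [seq (Top p.1 p.2 : op X) | p <- t] [seq (x p.1 == x p.2) | p <- t].
Proof. by move=> h; elim: t => [|p t IH] //=; rewrite h. Qed.

Lemma eta_bound x :
  all2 (fun P b => nrm (app (compl (Qb b P)) (Psi (Gf s) x)) <= (5%:R / 8%:R) ^+ r) Ls (bst x).
Proof.
apply: all2_map_pair => [[i j]] /=.
have Gr := @Gf_real F n s.
have Gn := @Gf_norm F n s cardF.
have G0 := @Gf_ov0 F n s.
have G1 := Gf_ov1 F bigF.
case: eqP => hx /=.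
  have -> : app (compl (Top i j : op X)) (Psi (Gf s) x) = fun _ => 0.
    apply: functional_extensionality => A.
    by rewrite app_compl Top_fix ?subrr // => U B; apply: Psi_eq.
  rewrite /nrm /dotv big1 ?exprn_ge0 // ?mulr_ge0 ?invr_ge0 ?ler0n // => A _.
  by rewrite mulr0.
have -> : app (compl (compl (Top i j : op X))) (Psi (Gf s) x) = app (Top i j : op X) (Psi (Gf s) x).
  apply: functional_extensionality => A; rewrite /app.
  by apply: eq_bigr => B _; rewrite complK.
rewrite nrm_app_proj; last exact: Top_proj.
have hx' : x i != x j by apply/eqP.
exact: (qf_Top_le r Gr Gn (fun u w _ => G0 u w) G1 hx').
Qed.

Lemma success x : ((k * k)%:R : algC) * (5%:R / 8%:R) ^+ r <= 64%:R^-1 ->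
  2%:R / 3%:R <= \sum_(P | groupbyeq_correct x P)
     outcome_prob Emeas (tensor_states (fun i => msg i (x i))) P.
Proof.
move=> hsmall.
have Gr := @Gf_real F n s.
have Gn := @Gf_norm F n s cardF.
pose Ps : X -> algC := Psi (Gf s) x.
have hn : nrm Ps = 1 by apply: (nrm_Psi r Gr Gn).
have hsz : size Ls = (k * k)%N by rewrite size_map size_allpairs size_enum_ord.
have hub := Aseq_ub allproj_Ls (eta_bound x) Ps.
have h0 : nrm (vsub Ps Ps) = 0.
  by rewrite /nrm /dotv /vsub big1 // => a _; rewrite subrr mulr0.
rewrite h0 add0r hsz in hub.
have hs : size (bst x) = size Ls by rewrite !size_map.
have hlb := Ef_lb Fdec Ps allproj_Ls hs.
have hsub := nrm_sub_lb Ps (Aseq Ls (bst x) Ps).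
rewrite hn mulr1 in hsub.
rewrite (bigD1 (Fdec (bst x))) ?Fdec_correct //=.
rewrite -[X in X <= _]addr0; apply: lerD; last first.
  apply: sumr_ge0 => P _; rewrite outcome_E; apply: qf_psd.
  by apply: Ef_psd; apply: allproj_Ls.
rewrite outcome_E; apply: le_trans hlb.
apply: le_trans hsub.
apply: (@le_trans _ _ (5%:R / 6%:R - 5%:R * 64%:R^-1)).
  have -> : 5%:R / 6%:R - 5%:R * 64%:R^-1 = 2%:R / 3%:R + 17%:R / 192%:R :> algC by field.
  by rewrite lerDl divr_ge0 ?ler0n.
rewrite lerD2l lerN2 ler_wpM2l ?ler0n //.
exact: le_trans hub hsmall.
Qed.

End Assembly.

Lemma num_bound (k L : nat) : (1 <= L)%N -> (k < 2 ^ L.+1)%N -> (64 * (k * k) <= 4 ^ (L + 4))%N.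
Proof.
move=> h1 h2. have -> : (4 ^ (L + 4) = 256 * (2 ^ L * 2 ^ L))%N.
  by rewrite expnD -[4%N]/(2*2)%N expnMn mulnC.
rewrite expnS in h2. move: (2 ^ L)%N h2 => P h2. nia.
Qed.

Lemma alg_bound (k t : nat) : (64 * (k * k) <= 4 ^ t)%N ->
  ((k * k)%:R : algC) * (5%:R / 8%:R) ^+ (3 * t) <= 64%:R^-1.
Proof.
move=> h.
have h3 : (5%:R / 8%:R : algC) ^+ 3 <= 4%:R^-1.
  have -> : (4%:R^-1 : algC) = (5%:R / 8%:R) ^+ 3 + 3%:R / 512%:R by field.
  by rewrite lerDl divr_ge0 ?ler0n.
have ht : (5%:R / 8%:R : algC) ^+ (3 * t) <= ((4 ^ t)%:R)^-1.
  rewrite exprM natrX -exprVn; apply: lerXn2r => //.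
  - by rewrite qualifE /= exprn_ge0 // divr_ge0 ?ler0n.
  - by rewrite qualifE /= invr_ge0 ler0n.
apply: (@le_trans _ _ ((k * k)%:R * ((4 ^ t)%:R)^-1)).
  by rewrite ler_wpM2l ?ler0n.
have h4 : (0 : algC) < (4 ^ t)%:R by rewrite ltr0n expn_gt0.
rewrite ler_pdivrMr // mulrC ler_pdivlMr ?ltr0n // -natrM ler_nat.
by rewrite mulnC.
Qed.

Theorem theorem7 :
  exists C : nat, forall k n : nat, (2 <= k)%N -> (2 <= n)%N ->
  exists (q : 'I_k -> nat)
         (msg : forall i : 'I_k, n.-tuple bool -> op (qbasis (q i)))
         (E : {set {set 'I_k}} -> op (jbasis q)),
    [/\ (\sum_(i < k) q i <= C * (k * trunc_log 2 k * trunc_log 2 n))%N,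
        (forall (i : 'I_k) (y : n.-tuple bool), density (msg i y)),
        povm E &
        forall x : 'I_k -> n.-tuple bool,
          2%:R / 3%:R <=
          \sum_(P : {set {set 'I_k}} | groupbyeq_correct x P)
             outcome_prob E (tensor_states (fun i => msg i (x i))) P].
Proof.
exists 120%N => k n hk hn.
set Lk := trunc_log 2 k. set Ln := trunc_log 2 n.
have Lk1 : (0 < Lk)%N by rewrite /Lk trunc_log_gt0.
have Ln1 : (0 < Ln)%N by rewrite /Ln trunc_log_gt0.
have kb : (k < 2 ^ Lk.+1)%N by apply: trunc_log_ltn.
have nb : (n < 2 ^ Ln.+1)%N by apply: trunc_log_ltn.
pose s := Ln.+1. pose t := (Lk + 4)%N. pose r := (3 * t)%N. pose Q := (r * (4 * s))%N.
have [F _ cardF] := @pPrimePowerField 2 (2 * s) (isT : prime 2) (isT : (0 < 2 * Ln.+1)%N).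
have bigF : (2 * n <= 2 ^ (2 * s))%N.
  have -> : (2 ^ (2 * s) = 2 * 2 ^ Ln * (2 * 2 ^ Ln))%N.
    by rewrite mul2n -addnn expnD /s expnS.
  rewrite expnS in nb; have := expn_gt0 2 Ln; move: (2 ^ Ln)%N nb => P nb hP /=.
  nia.
have cardQ : #|{: qbasis Q}| = #|{: {ffun 'I_r -> (F * F)%type}}|.
  rewrite !card_ffun card_bool card_prod cardF !card_ord -expnD -expnM.
  congr expn; rewrite /Q; lia.
exists (qq Q), (fun i => @msg k n s r Q F cardQ i), (Emeas cardQ).
split.
- rewrite /qq big_const_ord iter_addn_0 /Q /r /t /s.
  nia.
- by move=> i y; apply: msg_density.
- exact: povm_E.
move=> x; apply: (success cardF bigF).
exact: alg_bound (num_bound Lk1 kb).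
Qed.
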